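(* Assume $\rho<1$ and that the limits $f_j(z)=\lim_{n\to\infty}\mathbb E[z^{X_n}1_{\{J_{n+1}=j\}}]$, $|z|\le1$, exist (so $f_j(0)=\lim_n\mathbb P(X_n=0,J_{n+1}=j)$ and $f_j(1)=\pi_j$). Then for $|z|\le 1$ and $j=1,\dots,N$, $$(z-A_{jj}(z))f_j(z)-\sum_{i\neq j}A_{ij}(z)f_i(z)=(B(z)-1)\sum_{i=1}^N A_{ij}(z)f_i(0),$$ i.e. $M(z)^T f(z)=(B(z)-1)A(z)^Tf(0)$ with $f(z)=(f_1(z),\dots,f_N(z))^T$. Moreover, if $\mathbb E[B]<\infty$, then $$\sum_{i=1}^N f_i(0)=\frac{1-\rho}{\mathbb E[B]}.$$
   Context: Let $N\ge 2$. For $i,j\in\{1,\dots,N\}$ let $A_{ij}(z)=\sum_{k\ge 0}a_{ij}(k)z^k$ with $a_{ij}(k)\ge0$, $P_{ij}=A_{ij}(1)$, $\alpha_{ij}=A'_{ij}(1)<\infty$; $P=(P_{ij})$ is stochastic and irreducible with stationary distribution $\pi$, and $\rho=\sum_{i,j}\pi_i\alpha_{ij}$. $A(z)=(A_{ij}(z))$ and $M(z)=zI-A(z)$. Let $(A_n,J_{n+1})_{n\ge1}$ be random variables with $A_n\in\{0,1,\dots\}$, $J_n\in\{1,\dots,N\}$, such that conditionally on $J_n=i$ and on all earlier variables and all $B_m$, $\mathbb P(A_n=k,J_{n+1}=j)=a_{ij}(k)$. Let $(B_n)$ be i.i.d. positive-integer-valued with generating function $B(z)$ and mean $\mathbb E[B]$,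 independent of everything else. Let $X_0$ be a nonnegative integer and $X_n=X_{n-1}-1+A_n$ if $X_{n-1}\ge1$, $X_n=A_n+B_n-1$ if $X_{n-1}=0$. *)

(* Defs.v *)
From Stdlib Require Import Reals Lra Lia ClassicalEpsilon.
Open Scope R_scope.

Record Cplx : Type := mkC { Cre : R ; Cim : R }.
Definition RtoC (x : R) : Cplx := mkC x 0.
Definition Czero : Cplx := RtoC 0.
Definition Cone : Cplx := RtoC 1.
Definition Cadd (u v : Cplx) : Cplx := mkC (Cre u + Cre v) (Cim u + Cim v).
Definition Copp (u : Cplx) : Cplx := mkC (- Cre u) (- Cim u).
Definition Csub (u v : Cplx) : Cplx := Cadd u (Copp v).
Definition Cmul (u v : Cplx) : Cplx :=
  mkC (Cre u * Cre v - Cim u * Cim v) (Cre u * Cim v + Cim u * Cre v).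
Fixpoint Cpow (z : Cplx) (n : nat) : Cplx :=
  match n with O => Cone | S m => Cmul z (Cpow z m) end.
Definition Cnorm (z : Cplx) : R := sqrt (Cre z * Cre z + Cim z * Cim z).

Fixpoint fsum (n : nat) (f : nat -> R) : R :=
  match n with O => 0 | S m => fsum m f + f m end.
Fixpoint Cfsum (n : nat) (f : nat -> Cplx) : Cplx :=
  match n with O => Czero | S m => Cadd (Cfsum m f) (f m) end.

Definition Ccv (u : nat -> Cplx) (l : Cplx) : Prop :=
  Un_cv (fun n => Cre (u n)) (Cre l) /\ Un_cv (fun n => Cim (u n)) (Cim l).
Definition Cseries_cv (u : nat -> Cplx) (s : Cplx) : Prop :=
  Ccv (fun n => Cfsum (S n) u) s.

(* sums of convergent series (chosen by epsilon; meaningful when convergent) *)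
Definition rsum (u : nat -> R) : R :=
  epsilon (inhabits 0) (fun l => infinite_sum u l).
Definition Csum (u : nat -> Cplx) : Cplx :=
  epsilon (inhabits Czero) (fun s => Cseries_cv u s).

Definition gf (c : nat -> R) (z : Cplx) : Cplx :=
  Csum (fun k => Cmul (RtoC (c k)) (Cpow z k)).

Fixpoint matpow (N : nat) (P : nat -> nat -> R) (n : nat) : nat -> nat -> R :=
  match n with
  | O => fun i j => if Nat.eqb i j then 1 else 0
  | S m => fun i j => fsum N (fun l => matpow N P m i l * P l j)
  end.

Definition irreducible (N : nat) (P : nat -> nat -> R) : Prop :=
  forall i j, (i < N)%nat -> (j < N)%nat -> exists n, matpow N P n i j > 0.

(* ---------- law of the Markov chain (X_n, J_{n+1}) ----------
   a i j k = a_{ij}(k), b k = P(B = k), x0 = X_0, q j = P(J_1 = j).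
   law N a b x0 q n y j = P(X_n = y, J_{n+1} = j). *)
Fixpoint law (N : nat) (a : nat -> nat -> nat -> R) (b : nat -> R)
  (x0 : nat) (q : nat -> R) (n : nat) : nat -> nat -> R :=
  match n with
  | O => fun y j => if Nat.eqb y x0 then q j else 0
  | S m => fun y j =>
      fsum N (fun i =>
        (* X_{m} = x >= 1 :  X_{m+1} = x - 1 + A, x ranges over 1..y+1 *)
        fsum (S y) (fun t => law N a b x0 q m (S t) i * a i j (y - t)%nat)
        (* X_{m} = 0 :  X_{m+1} = A + B - 1, B = c+1 with c = 0..y *)
        + law N a b x0 q m 0 i *
            fsum (S y) (fun c => a i j (y - c)%nat * b (S c)))
  end.

(* Main.v *)
From Pilot Require Import Defs.
From Coquelicot Require Import Coquelicot.
From Stdlib Require Import Reals Lra Lia ClassicalEpsilon Psatz.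
Import Pilot.Defs.
Open Scope R_scope.

Lemma IS_plus a b la lb : infinite_sum a la -> infinite_sum b lb ->
  infinite_sum (fun n => a n + b n) (la + lb).
Proof. intros Ha Hb. apply is_series_Reals.
  apply (is_series_plus a b la lb); apply is_series_Reals; auto. Qed.

Lemma IS_scal c a la : infinite_sum a la -> infinite_sum (fun n => c * a n) (c * la).
Proof. intros Ha. apply is_series_Reals.
  apply (is_series_scal c a la); apply is_series_Reals; auto. Qed.

Lemma IS_ext a b l : (forall n, a n = b n) -> infinite_sum a l -> infinite_sum b l.
Proof. intros E H eps He. destruct (H eps He) as [M HM]. exists M. intros n Hn.
  replace (sum_f_R0 b n) with (sum_f_R0 a n). apply HM; auto.
  apply sum_eq; auto. Qed.

Lemma IS_opp a la : infinite_sum a la -> infinite_sum (fun n => - a n) (- la).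
Proof. intros H. apply IS_ext with (fun n => -1 * a n). intros; ring.
  replace (-la) with (-1*la) by ring. apply IS_scal; auto. Qed.

Lemma IS_minus a b la lb : infinite_sum a la -> infinite_sum b lb ->
  infinite_sum (fun n => a n - b n) (la - lb).
Proof. intros. apply IS_plus; auto. apply IS_opp; auto. Qed.

Lemma IS_eq l1 a l2 : infinite_sum a l1 -> infinite_sum a l2 -> l1 = l2.
Proof. apply uniqueness_sum. Qed.

Lemma IS_le a b la lb : (forall n, a n <= b n) -> infinite_sum a la -> infinite_sum b lb -> la <= lb.
Proof. intros H Ha Hb. eapply Rle_cv_lim; [|exact Ha|exact Hb].
  intros n. apply sum_Rle. intros; auto. Qed.

Lemma rsum_eq a l : infinite_sum a l -> rsum a = l.
Proof. intros H. unfold rsum. apply (IS_eq _ a).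
  apply epsilon_spec. exists l; auto. auto. Qed.

Lemma IS_unshift a l : infinite_sum (fun k => a (S k)) l -> infinite_sum a (l + a O).
Proof. intros H. apply is_series_Reals. apply is_series_decr_1.
  change (plus (l + a O) (opp (a O))) with (l + a O + - a O).
  replace (l + a O + - a O) with l by ring. apply is_series_Reals; auto. Qed.

Lemma IS_shift a l : infinite_sum a l -> infinite_sum (fun k => a (S k)) (l - a O).
Proof. intros H. apply is_series_Reals. apply is_series_incr_1.
  change (plus (l - a O) (a O)) with (l - a O + a O).
  replace (l - a O + a O) with l by ring. apply is_series_Reals; auto. Qed.

Lemma IS_comp u c sc : (forall n, Rabs (u n) <= c n) -> infinite_sum c sc ->
  exists s, infinite_sum u s.
Proof. intros H Hc.
  assert (E : ex_series u).
  { apply (ex_series_le u c). intros n. apply H. exists sc. apply is_series_Reals; auto. }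
  destruct E as [s Hs]. exists s. apply is_series_Reals; auto. Qed.

Lemma IS_zero : infinite_sum (fun _ => 0) 0.
Proof. intros eps He. exists O. intros n _.
  assert (sum_f_R0 (fun _ => 0) n = 0). { induction n; simpl; auto. rewrite IHn; ring. }
  rewrite H. unfold R_dist. rewrite Rminus_0_r, Rabs_R0; auto. Qed.

Lemma IS_head a : (forall k, a (S k) = 0) -> infinite_sum a (a O).
Proof. intros H. replace (a O) with (0 + a O) by ring. apply IS_unshift.
  apply IS_ext with (fun _ => 0). intros; rewrite H; auto. apply IS_zero. Qed.

Lemma fsum_ext_lt N f g : (forall i, (i < N)%nat -> f i = g i) -> fsum N f = fsum N g.
Proof. induction N; simpl; intros H; auto. rewrite IHN, H; auto. Qed.

Lemma fsum_plus N f g : fsum N (fun i => f i + g i) = fsum N f + fsum N g.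
Proof. induction N; simpl. ring. rewrite IHN; ring. Qed.

Lemma fsum_minus N f g : fsum N (fun i => f i - g i) = fsum N f - fsum N g.
Proof. induction N; simpl. ring. rewrite IHN; ring. Qed.

Lemma fsum_scal N c f : fsum N (fun i => c * f i) = c * fsum N f.
Proof. induction N; simpl. ring. rewrite IHN; ring. Qed.

Lemma fsum_scal_r N c f : fsum N (fun i => f i * c) = fsum N f * c.
Proof. induction N; simpl. ring. rewrite IHN; ring. Qed.

Lemma fsum_swap N M g : fsum N (fun i => fsum M (fun j => g i j)) = fsum M (fun j => fsum N (fun i => g i j)).
Proof. induction N; simpl.
  - induction M; simpl; auto. rewrite <- IHM; ring.
  - rewrite IHN. rewrite <- fsum_plus. auto. Qed.

Lemma fsum_nonneg N f : (forall i, (i < N)%nat -> 0 <= f i) -> 0 <= fsum N f.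
Proof. induction N; simpl; intros H. lra. assert (0 <= f N) by (apply H; lia).
  assert (0 <= fsum N f) by (apply IHN; intros; apply H; lia). lra. Qed.

Lemma fsum_le N f g : (forall i, (i < N)%nat -> f i <= g i) -> fsum N f <= fsum N g.
Proof. induction N; simpl; intros H. lra. assert (f N <= g N) by (apply H; lia).
  assert (fsum N f <= fsum N g) by (apply IHN; intros; apply H; lia). lra. Qed.

Lemma fsum_sum_f_R0 n f : fsum (S n) f = sum_f_R0 f n.
Proof. induction n. simpl; ring. change (fsum (S (S n)) f) with (fsum (S n) f + f (S n)).
  rewrite IHn. simpl. auto. Qed.

Lemma fsum_ge_term N f i : (forall i, (i < N)%nat -> 0 <= f i) -> (i < N)%nat -> f i <= fsum N f.
Proof. induction N; simpl; intros H Hi. lia.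
  destruct (Nat.eq_dec i N). subst. assert (0 <= fsum N f) by (apply fsum_nonneg; intros; apply H; lia). lra.
  assert (f i <= fsum N f) by (apply IHN; [intros; apply H; lia| lia]).
  assert (0 <= f N) by (apply H; lia). lra. Qed.

Lemma fsum_zero_terms N f : (forall i, (i < N)%nat -> 0 <= f i) -> fsum N f = 0 ->
  forall i, (i < N)%nat -> f i = 0.
Proof. intros H E i Hi. assert (f i <= fsum N f) by (apply fsum_ge_term; auto).
  assert (0 <= f i) by auto. lra. Qed.

Lemma fsum_delta N f j : (j < N)%nat -> fsum N (fun i => if Nat.eqb i j then f i else 0) = f j.
Proof. induction N; simpl; intros H. lia.
  destruct (Nat.eq_dec j N). subst. rewrite Nat.eqb_refl.
  rewrite (fsum_ext_lt N _ (fun _ => 0)). clear. induction N; simpl; auto; lra.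
  intros i Hi. destruct (Nat.eqb_spec i N); auto; lia.
  destruct (Nat.eqb_spec N j). lia. rewrite IHN by lia. ring. Qed.

Lemma IS_fsum N u l : (forall i, (i < N)%nat -> infinite_sum (u i) (l i)) ->
  infinite_sum (fun k => fsum N (fun i => u i k)) (fsum N l).
Proof. induction N; simpl; intros H. apply IS_zero.
  apply IS_plus. apply IHN; intros; apply H; lia. apply H; lia. Qed.

Lemma cv_const c : Un_cv (fun _ => c) c.
Proof. intros e He. exists O. intros. unfold R_dist. rewrite Rminus_diag, Rabs_R0. auto. Qed.

Lemma cv_scal c u l : Un_cv u l -> Un_cv (fun n => c * u n) (c * l).
Proof. intros H. apply CV_mult; auto. apply cv_const. Qed.

Lemma cv_fsum N u l : (forall i, (i < N)%nat -> Un_cv (u i) (l i)) ->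
  Un_cv (fun n => fsum N (fun i => u i n)) (fsum N l).
Proof. induction N; simpl; intros H. apply cv_const.
  apply CV_plus. apply IHN; intros; apply H; lia. apply H; lia. Qed.

Lemma cv_S u l : Un_cv u l -> Un_cv (fun n => u (S n)) l.
Proof. intros H e He. destruct (H e He) as [M HM]. exists M. intros; apply HM; lia. Qed.

Lemma cv_ext u v l : (forall n, u n = v n) -> Un_cv u l -> Un_cv v l.
Proof. intros E H e He. destruct (H e He) as [M HM]. exists M. intros; rewrite <- E; apply HM; lia. Qed.

Lemma Cext u v : Cre u = Cre v -> Cim u = Cim v -> u = v.
Proof. destruct u, v; simpl; intros; subst; auto. Qed.

Lemma Cring : ring_theory Czero Cone Cadd Cmul Csub Copp (@eq Cplx).
Proof. constructor; intros; apply Cext; simpl; ring. Qed.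
Add Ring CR : Cring.

Lemma Cfsum_re n u : Cre (Cfsum n u) = fsum n (fun i => Cre (u i)).
Proof. induction n; simpl; auto. rewrite IHn; auto. Qed.
Lemma Cfsum_im n u : Cim (Cfsum n u) = fsum n (fun i => Cim (u i)).
Proof. induction n; simpl; auto. rewrite IHn; auto. Qed.

Definition CS (u : nat -> Cplx) (s : Cplx) :=
  infinite_sum (fun k => Cre (u k)) (Cre s) /\ infinite_sum (fun k => Cim (u k)) (Cim s).

Lemma CS_iff u s : CS u s <-> Cseries_cv u s.
Proof. unfold CS, Cseries_cv, Ccv. split; intros [H1 H2]; split.
  - apply (cv_ext (sum_f_R0 (fun k => Cre (u k)))); [|exact H1]. intros n. rewrite Cfsum_re, fsum_sum_f_R0. auto.
  - apply (cv_ext (sum_f_R0 (fun k => Cim (u k)))); [|exact H2]. intros n. rewrite Cfsum_im, fsum_sum_f_R0. auto.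
  - apply (cv_ext _ (sum_f_R0 (fun k => Cre (u k)))) in H1. exact H1.
    intros n. rewrite <- fsum_sum_f_R0, <- Cfsum_re. auto.
  - apply (cv_ext _ (sum_f_R0 (fun k => Cim (u k)))) in H2. exact H2.
    intros n. rewrite <- fsum_sum_f_R0, <- Cfsum_im. auto. Qed.

Lemma CS_unique u s t : CS u s -> CS u t -> s = t.
Proof. intros [H1 H2] [H3 H4]. apply Cext; eapply IS_eq; eauto. Qed.

Lemma Csum_spec u : (exists s, CS u s) -> CS u (Csum u).
Proof. intros [s Hs]. apply CS_iff. unfold Csum. apply epsilon_spec. exists s. apply CS_iff; auto. Qed.

Lemma Csum_eq u s : CS u s -> Csum u = s.
Proof. intros H. apply (CS_unique u). apply Csum_spec; eauto. auto. Qed.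

Lemma CS_ext u v s : (forall k, u k = v k) -> CS u s -> CS v s.
Proof. intros E [H1 H2]. split; eapply IS_ext; eauto; intros; simpl; rewrite E; auto. Qed.

Lemma CS_plus u v s t : CS u s -> CS v t -> CS (fun k => Cadd (u k) (v k)) (Cadd s t).
Proof. intros [H1 H2] [H3 H4]. split; simpl; apply IS_plus; auto. Qed.

Lemma CS_mul w u s : CS u s -> CS (fun k => Cmul w (u k)) (Cmul w s).
Proof. intros [H1 H2]. split; simpl.
  apply IS_minus; apply IS_scal; auto. apply IS_plus; apply IS_scal; auto. Qed.

Lemma CS_fsum N u l : (forall i, (i < N)%nat -> CS (u i) (l i)) ->
  CS (fun k => Cfsum N (fun i => u i k)) (Cfsum N l).
Proof. intros H. split.
  - rewrite Cfsum_re. eapply IS_ext. intros; rewrite <- Cfsum_re; reflexivity.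
    apply IS_fsum. intros; apply H; auto.
  - rewrite Cfsum_im. eapply IS_ext. intros; rewrite <- Cfsum_im; reflexivity.
    apply IS_fsum. intros; apply H; auto. Qed.

Definition nrm (z : Cplx) := Cre z * Cre z + Cim z * Cim z.

Lemma nrm_mul u v : nrm (Cmul u v) = nrm u * nrm v.
Proof. unfold nrm; simpl; ring. Qed.

Lemma nrm_pos u : 0 <= nrm u.
Proof. unfold nrm; nra. Qed.

Lemma nrm_pow z k : nrm z <= 1 -> nrm (Cpow z k) <= 1.
Proof. intros H. induction k; simpl. unfold nrm; simpl; lra.
  rewrite nrm_mul. pose proof (nrm_pos z). pose proof (nrm_pos (Cpow z k)). nra. Qed.

Lemma nrm_re u : nrm u <= 1 -> Rabs (Cre u) <= 1.
Proof. unfold nrm; intros H. apply Rabs_le. nra. Qed.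
Lemma nrm_im u : nrm u <= 1 -> Rabs (Cim u) <= 1.
Proof. unfold nrm; intros H. apply Rabs_le. nra. Qed.

Lemma Cnorm_nrm z : Cnorm z <= 1 -> nrm z <= 1.
Proof. unfold Cnorm, nrm. intros H. pose proof (sqrt_pos (Cre z * Cre z + Cim z * Cim z)).
  rewrite <- (sqrt_sqrt (Cre z * Cre z + Cim z * Cim z)) by nra. nra. Qed.

Lemma Cpow_add z n m : Cpow z (n + m) = Cmul (Cpow z n) (Cpow z m).
Proof. induction n; simpl. ring. rewrite IHn. ring. Qed.

Definition gterm (c : nat -> R) (z : Cplx) k := Cmul (RtoC (c k)) (Cpow z k).

Lemma re_RtoC_mul c w : Cre (Cmul (RtoC c) w) = c * Cre w.
Proof. simpl; ring. Qed.
Lemma im_RtoC_mul c w : Cim (Cmul (RtoC c) w) = c * Cim w.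
Proof. simpl; ring. Qed.

Definition summable (c : nat -> R) := exists s, infinite_sum c s.
Definition nn (c : nat -> R) := forall k, 0 <= c k.

Lemma gf_CS c z : nn c -> summable c -> nrm z <= 1 -> CS (gterm c z) (gf c z).
Proof. intros Hn [S HS] Hz. unfold gf. apply Csum_spec.
  destruct (IS_comp (fun k => Cre (gterm c z k)) c S) as [sr Hr]; auto.
  { intros k. unfold gterm. rewrite re_RtoC_mul, Rabs_mult, (Rabs_pos_eq (c k)) by auto.
    pose proof (nrm_re _ (nrm_pow z k Hz)). specialize (Hn k). nra. }
  destruct (IS_comp (fun k => Cim (gterm c z k)) c S) as [si Hi]; auto.
  { intros k. unfold gterm. rewrite im_RtoC_mul, Rabs_mult, (Rabs_pos_eq (c k)) by auto.
    pose proof (nrm_im _ (nrm_pow z k Hz)). specialize (Hn k). nra. }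
  exists (mkC sr si). split; auto. Qed.

Lemma gf_char c z s : CS (gterm c z) s -> gf c z = s.
Proof. intros H. unfold gf. apply Csum_eq. auto. Qed.

Lemma CS_unshift u s : CS (fun k => u (S k)) s -> CS u (Cadd s (u O)).
Proof. intros [H1 H2]. split; simpl; apply (IS_unshift (fun k => _ (u k))); auto. Qed.

Lemma summable_shift c : summable c -> summable (fun k => c (S k)).
Proof. intros [s H]. eexists. apply IS_shift; eauto. Qed.

Lemma gf_plus c d z : nn c -> nn d -> summable c -> summable d -> nrm z <= 1 ->
  gf (fun k => c k + d k) z = Cadd (gf c z) (gf d z).
Proof. intros. apply gf_char. eapply CS_ext; [|apply CS_plus; apply gf_CS; eauto].
  intros k; apply Cext; unfold gterm; simpl; ring. Qed.

Lemma gf_scal l c z : nn c -> summable c -> nrm z <= 1 ->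
  gf (fun k => l * c k) z = Cmul (RtoC l) (gf c z).
Proof. intros. apply gf_char. eapply CS_ext; [|apply CS_mul; apply gf_CS; eauto].
  intros k; apply Cext; unfold gterm; simpl; ring. Qed.

Lemma gf_fsum N c z : (forall i, (i < N)%nat -> nn (c i) /\ summable (c i)) -> nrm z <= 1 ->
  gf (fun k => fsum N (fun i => c i k)) z = Cfsum N (fun i => gf (c i) z).
Proof. intros H Hz. apply gf_char.
  eapply CS_ext; [|apply CS_fsum; intros i Hi; apply gf_CS; [apply H|apply H|]; auto].
  intros k. unfold gterm. apply Cext.
  - rewrite re_RtoC_mul, Cfsum_re. rewrite <- fsum_scal_r.
    apply fsum_ext_lt. intros; rewrite re_RtoC_mul; ring.
  - rewrite im_RtoC_mul, Cfsum_im. rewrite <- fsum_scal_r.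
    apply fsum_ext_lt. intros; rewrite im_RtoC_mul; ring. Qed.

Lemma gf_zero c : gf c Czero = RtoC (c O).
Proof. apply gf_char. split.
  - simpl (Cre (RtoC (c O))). replace (c O) with (Cre (gterm c Czero O)).
    apply IS_head. intros k. unfold gterm; simpl; ring.
    unfold gterm; simpl; ring.
  - simpl (Cim (RtoC (c O))). replace 0 with (Cim (gterm c Czero O)).
    apply IS_head. intros k. unfold gterm; simpl; ring.
    unfold gterm; simpl; ring. Qed.

Lemma gf_shift c z : nn c -> summable c -> nrm z <= 1 ->
  gf c z = Cadd (RtoC (c O)) (Cmul z (gf (fun k => c (S k)) z)).
Proof. intros Hn Hs Hz. apply gf_char.
  assert (H := gf_CS (fun k => c (S k)) z (fun k => Hn (S k)) (summable_shift c Hs) Hz).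
  apply (CS_mul z) in H.
  assert (H2 : CS (fun k => gterm c z (S k)) (Cmul z (gf (fun k => c (S k)) z))).
  { eapply CS_ext; [|exact H]. intros k; unfold gterm; apply Cext; simpl; ring. }
  apply (CS_unshift (gterm c z)) in H2.
  replace (Cadd (RtoC (c O)) (Cmul z (gf (fun k : nat => c (S k)) z)))
    with (Cadd (Cmul z (gf (fun k : nat => c (S k)) z)) (gterm c z O)). exact H2.
  unfold gterm; simpl. apply Cext; simpl; ring. Qed.

Definition conv (c d : nat -> R) (n : nat) := fsum (S n) (fun t => c t * d (n - t)%nat).

Lemma conv_nn c d : nn c -> nn d -> nn (conv c d).
Proof. intros Hc Hd n. unfold conv. apply fsum_nonneg. intros. apply Rmult_le_pos; auto. Qed.

Lemma conv_IS c d sc sd : nn c -> nn d -> infinite_sum c sc -> infinite_sum d sd ->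
  infinite_sum (conv c d) (sc * sd).
Proof. intros. apply is_series_Reals. eapply is_series_ext.
  2: apply is_series_mult_pos; [apply is_series_Reals; eauto|apply is_series_Reals; eauto|auto|auto].
  intros n; simpl. unfold conv. rewrite fsum_sum_f_R0. auto. Qed.

Lemma conv_summable c d : nn c -> nn d -> summable c -> summable d -> summable (conv c d).
Proof. intros ? ? [] []. eexists; apply conv_IS; eauto. Qed.

Lemma abs_ex u c sc : (forall n, Rabs (u n) <= c n) -> infinite_sum c sc ->
  ex_series (fun n => Rabs (u n)).
Proof. intros H Hc. destruct (IS_comp (fun n => Rabs (u n)) c sc) as [s Hs].
  intros; rewrite Rabs_Rabsolu; auto. auto. exists s. apply is_series_Reals; auto. Qed.

Lemma gf_conv c d z : nn c -> nn d -> summable c -> summable d -> nrm z <= 1 ->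
  gf (conv c d) z = Cmul (gf c z) (gf d z).
Proof. intros Hc Hd [sc Sc] [sd Sd] Hz.
  destruct (gf_CS c z Hc (ex_intro _ sc Sc) Hz) as [Cr Ci].
  destruct (gf_CS d z Hd (ex_intro _ sd Sd) Hz) as [Dr Di].
  set (cr k := c k * Cre (Cpow z k)). set (ci k := c k * Cim (Cpow z k)).
  set (dr k := d k * Cre (Cpow z k)). set (di k := d k * Cim (Cpow z k)).
  assert (Bc : forall k, Rabs (cr k) <= c k /\ Rabs (ci k) <= c k).
  { intros k; unfold cr, ci; rewrite !Rabs_mult, !(Rabs_pos_eq (c k)) by auto.
    pose proof (nrm_re _ (nrm_pow z k Hz)). pose proof (nrm_im _ (nrm_pow z k Hz)). specialize (Hc k). split; nra. }
  assert (Bd : forall k, Rabs (dr k) <= d k /\ Rabs (di k) <= d k).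
  { intros k; unfold dr, di; rewrite !Rabs_mult, !(Rabs_pos_eq (d k)) by auto.
    pose proof (nrm_re _ (nrm_pow z k Hz)). pose proof (nrm_im _ (nrm_pow z k Hz)). specialize (Hd k). split; nra. }
  assert (Cr' : infinite_sum cr (Cre (gf c z))) by (eapply IS_ext; [|exact Cr]; intros; unfold cr, gterm; simpl; ring).
  assert (Ci' : infinite_sum ci (Cim (gf c z))) by (eapply IS_ext; [|exact Ci]; intros; unfold ci, gterm; simpl; ring).
  assert (Dr' : infinite_sum dr (Cre (gf d z))) by (eapply IS_ext; [|exact Dr]; intros; unfold dr, gterm; simpl; ring).
  assert (Di' : infinite_sum di (Cim (gf d z))) by (eapply IS_ext; [|exact Di]; intros; unfold di, gterm; simpl; ring).
  clear Cr Ci Dr Di. rename Cr' into Cr. rename Ci' into Ci. rename Dr' into Dr. rename Di' into Di.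
  assert (Mrr := is_series_mult cr dr _ _ (proj2 (is_series_Reals _ _) Cr) (proj2 (is_series_Reals _ _) Dr)
     (abs_ex cr c sc (fun k => proj1 (Bc k)) Sc) (abs_ex dr d sd (fun k => proj1 (Bd k)) Sd)).
  assert (Mii := is_series_mult ci di _ _ (proj2 (is_series_Reals _ _) Ci) (proj2 (is_series_Reals _ _) Di)
     (abs_ex ci c sc (fun k => proj2 (Bc k)) Sc) (abs_ex di d sd (fun k => proj2 (Bd k)) Sd)).
  assert (Mri := is_series_mult cr di _ _ (proj2 (is_series_Reals _ _) Cr) (proj2 (is_series_Reals _ _) Di)
     (abs_ex cr c sc (fun k => proj1 (Bc k)) Sc) (abs_ex di d sd (fun k => proj2 (Bd k)) Sd)).
  assert (Mir := is_series_mult ci dr _ _ (proj2 (is_series_Reals _ _) Ci) (proj2 (is_series_Reals _ _) Dr)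
     (abs_ex ci c sc (fun k => proj2 (Bc k)) Sc) (abs_ex dr d sd (fun k => proj1 (Bd k)) Sd)).
  apply is_series_Reals in Mrr, Mii, Mri, Mir.
  apply gf_char. split.
  - simpl. eapply IS_ext; [|apply IS_minus; [exact Mrr|exact Mii]].
    intros n. symmetry. unfold gterm. match goal with |- ?a = _ => replace a with (conv c d n * Cre (Cpow z n)) by ring end. unfold conv. rewrite fsum_sum_f_R0.
    rewrite <- minus_sum. rewrite Rmult_comm, scal_sum. apply sum_eq. intros k Hk.
    replace (Cpow z n) with (Cmul (Cpow z k) (Cpow z (n - k))).
    unfold cr, dr, ci, di. simpl. ring.
    rewrite <- Cpow_add. f_equal. lia.
  - simpl. eapply IS_ext; [|apply IS_plus; [exact Mri|exact Mir]].
    intros n. symmetry. unfold gterm. match goal with |- ?a = _ => replace a with (conv c d n * Cim (Cpow z n)) by ring end. unfold conv. rewrite fsum_sum_f_R0.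
    rewrite <- plus_sum. rewrite Rmult_comm, scal_sum. apply sum_eq. intros k Hk.
    replace (Cpow z n) with (Cmul (Cpow z k) (Cpow z (n - k))).
    unfold cr, dr, ci, di. simpl. ring.
    rewrite <- Cpow_add. f_equal. lia. Qed.

From Stdlib Require Import FunctionalExtensionality.

Lemma gf_ext c d z : (forall k, c k = d k) -> gf c z = gf d z.
Proof. intros H. replace c with d; auto. extensionality k; auto. Qed.

Lemma Cfsum_ext_lt N u v : (forall i, (i < N)%nat -> u i = v i) -> Cfsum N u = Cfsum N v.
Proof. induction N; simpl; intros H; auto. rewrite IHN, H; auto. Qed.
Lemma Cfsum_add N u v : Cfsum N (fun i => Cadd (u i) (v i)) = Cadd (Cfsum N u) (Cfsum N v).
Proof. induction N; simpl. ring. rewrite IHN; ring. Qed.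
Lemma Cfsum_mul N w u : Cmul w (Cfsum N u) = Cfsum N (fun i => Cmul w (u i)).
Proof. induction N; simpl. ring. rewrite <- IHN; ring. Qed.

Lemma summable_ext c d : (forall k, c k = d k) -> summable c -> summable d.
Proof. intros E [s H]. exists s. eapply IS_ext; eauto. Qed.
Lemma summable_plus c d : summable c -> summable d -> summable (fun k => c k + d k).
Proof. intros [s H] [t H']. exists (s + t). apply IS_plus; auto. Qed.
Lemma summable_scal l c : summable c -> summable (fun k => l * c k).
Proof. intros [s H]. exists (l * s). apply IS_scal; auto. Qed.
Lemma summable_fsum N u : (forall i, (i < N)%nat -> summable (u i)) ->
  summable (fun k => fsum N (fun i => u i k)).
Proof. induction N; simpl; intros H. exists 0; apply IS_zero.
  apply summable_plus. apply IHN; intros; apply H; lia. apply H; lia. Qed.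

Lemma IS_single m c : infinite_sum (fun k => if Nat.eqb k m then c else 0) c.
Proof. induction m.
  - apply (IS_head (fun k => if Nat.eqb k 0 then c else 0)). intros; simpl; auto.
  - assert (H := IS_unshift (fun k => if Nat.eqb k (S m) then c else 0) c IHm).
    simpl in H. replace (c+0) with c in H by ring. exact H. Qed.

Section Law.
Variables (N : nat) (a : nat -> nat -> nat -> R) (b : nat -> R) (x0 : nat) (q : nat -> R).
Hypothesis Ha_nn : forall i j k, 0 <= a i j k.
Hypothesis Ha_sm : forall i j, (i < N)%nat -> (j < N)%nat -> summable (a i j).
Hypothesis Hb_nn : forall k, 0 <= b k.
Hypothesis Hb0 : b O = 0.
Hypothesis Hb_sum : infinite_sum b 1.
Hypothesis Hq_nn : forall j, (j < N)%nat -> 0 <= q j.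

Notation L n y j := (law N a b x0 q n y j).

Lemma law_S n y j : L (S n) y j = fsum N (fun i => conv (fun t => L n (S t) i) (a i j) y
   + L n O i * conv (fun c => b (S c)) (a i j) y).
Proof. change (L (S n) y j) with (fsum N (fun i =>
        fsum (S y) (fun t => L n (S t) i * a i j (y - t)%nat)
        + L n O i * fsum (S y) (fun c => a i j (y - c)%nat * b (S c)))).
  apply fsum_ext_lt. intros i _. unfold conv. f_equal. f_equal. apply fsum_ext_lt; intros; ring. Qed.

Lemma nn_a i j : nn (a i j). Proof. intros k; auto. Qed.
Lemma nn_b' : nn (fun c => b (S c)). Proof. intros k; auto. Qed.
Lemma sm_b' : summable (fun c => b (S c)). Proof. apply summable_shift. exists 1; auto. Qed.

Lemma law_nn n : forall y j, (j < N)%nat -> 0 <= L n y j.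
Proof. induction n; intros y j Hj.
  - simpl. destruct (Nat.eqb y x0); auto; lra.
  - rewrite law_S. apply fsum_nonneg. intros i Hi. apply Rplus_le_le_0_compat.
    apply conv_nn; [intros t; apply IHn; auto| apply nn_a].
    apply Rmult_le_pos. apply IHn; auto. apply conv_nn. apply nn_b'. apply nn_a. Qed.

Lemma law_nn' n j : (j < N)%nat -> nn (fun y => L n y j).
Proof. intros Hj y. apply law_nn; auto. Qed.

Lemma law_sm n : forall j, (j < N)%nat -> summable (fun y => L n y j).
Proof. induction n; intros j Hj.
  - exists (q j). eapply IS_ext; [|apply (IS_single x0 (q j))]. intros k; simpl. auto.
  - eapply summable_ext. intros y; symmetry; apply law_S.
    apply summable_fsum. intros i Hi. apply summable_plus.
    apply conv_summable; [intros t; apply law_nn; auto|apply nn_a|apply (summable_shift (fun y => L n y i)), IHn; auto|auto].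
    apply summable_scal. apply conv_summable; [apply nn_b'|apply nn_a|apply sm_b'|auto]. Qed.

Lemma gf_rec n j z : (j < N)%nat -> nrm z <= 1 ->
  Cmul z (gf (fun y => L (S n) y j) z) =
  Cadd (Cfsum N (fun i => Cmul (gf (a i j) z) (gf (fun y => L n y i) z)))
       (Cmul (Csub (gf b z) Cone) (Cfsum N (fun i => Cmul (gf (a i j) z) (RtoC (L n O i))))).
Proof. intros Hj Hz.
  rewrite (gf_ext _ (fun y => fsum N (fun i => conv (fun t => L n (S t) i) (a i j) y
   + L n O i * conv (fun c => b (S c)) (a i j) y))) by (intros; apply law_S).
  assert (HL' : forall i, (i < N)%nat -> nn (fun t => L n (S t) i) /\ summable (fun t => L n (S t) i)).
  { intros i Hi; split. intros t; apply law_nn; auto. apply (summable_shift (fun y => L n y i)), law_sm; auto. }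
  rewrite gf_fsum; auto.
  2:{ intros i Hi. destruct (HL' i Hi). split.
      intros y. apply Rplus_le_le_0_compat. apply conv_nn; auto. apply nn_a.
      apply Rmult_le_pos. apply law_nn; auto. apply conv_nn. apply nn_b'. apply nn_a.
      apply summable_plus. apply conv_summable; auto. apply nn_a.
      apply summable_scal, conv_summable; [apply nn_b'|apply nn_a|apply sm_b'|auto]. }
  rewrite (Cfsum_ext_lt N _ (fun i => Cadd (Cmul (gf (fun t => L n (S t) i) z) (gf (a i j) z))
      (Cmul (RtoC (L n O i)) (Cmul (gf (fun c => b (S c)) z) (gf (a i j) z))))).
  2:{ intros i Hi. destruct (HL' i Hi).
      rewrite gf_plus, gf_scal, !gf_conv; auto; try apply nn_a; try apply nn_b'; try apply sm_b'.
      apply conv_nn; [apply nn_b'|apply nn_a]. apply conv_summable; [apply nn_b'|apply nn_a|apply sm_b'|auto].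
      apply conv_nn; auto; apply nn_a. intros y; apply Rmult_le_pos. apply law_nn; auto.
      apply conv_nn; [apply nn_b'|apply nn_a]. apply conv_summable; auto. apply nn_a.
      apply summable_scal, conv_summable; [apply nn_b'|apply nn_a|apply sm_b'|auto]. }
  rewrite (gf_shift b) by (auto; exists 1; auto). rewrite Hb0.
  rewrite (Cfsum_ext_lt N (fun i => Cmul (gf (a i j) z) (gf (fun y => L n y i) z))
     (fun i => Cmul (gf (a i j) z) (Cadd (RtoC (L n O i)) (Cmul z (gf (fun t => L n (S t) i) z))))).
  2:{ intros i Hi. rewrite (gf_shift (fun y => L n y i)); auto. apply law_nn'; auto. apply law_sm; auto. }
  rewrite !Cfsum_mul. rewrite <- Cfsum_add. apply Cfsum_ext_lt. intros i Hi.
  change (RtoC 0) with Czero. ring. Qed.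

End Law.

Lemma Ccv_ext u v l : (forall n, u n = v n) -> Ccv u l -> Ccv v l.
Proof. intros E [H1 H2]. split; eapply cv_ext; eauto; intros; simpl; rewrite E; auto. Qed.
Lemma Ccv_unique u l1 l2 : Ccv u l1 -> Ccv u l2 -> l1 = l2.
Proof. intros [H1 H2] [H3 H4]. apply Cext; eapply UL_sequence; eauto. Qed.
Lemma Ccv_S u l : Ccv u l -> Ccv (fun n => u (S n)) l.
Proof. intros [H1 H2]; split; apply (cv_S (fun n => _ (u n))); auto. Qed.
Lemma Ccv_add u v l m : Ccv u l -> Ccv v m -> Ccv (fun n => Cadd (u n) (v n)) (Cadd l m).
Proof. intros [H1 H2] [H3 H4]; split; simpl; apply CV_plus; auto. Qed.
Lemma Ccv_mul w u l : Ccv u l -> Ccv (fun n => Cmul w (u n)) (Cmul w l).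
Proof. intros [H1 H2]; split; simpl.
  apply CV_minus; apply cv_scal; auto. apply CV_plus; apply cv_scal; auto. Qed.
Lemma Ccv_fsum N u l : (forall i, (i < N)%nat -> Ccv (u i) (l i)) ->
  Ccv (fun n => Cfsum N (fun i => u i n)) (Cfsum N l).
Proof. induction N; simpl; intros H. split; apply cv_const.
  apply Ccv_add. apply IHN; intros; apply H; lia. apply H; lia. Qed.

Lemma Cfsum_skip N u j : (j < N)%nat ->
  Cfsum N (fun i => if Nat.eqb i j then Czero else u i) = Csub (Cfsum N u) (u j).
Proof. induction N; simpl; intros H. lia.
  destruct (Nat.eq_dec j N). subst. rewrite Nat.eqb_refl.
  rewrite (Cfsum_ext_lt N _ u). ring.
  intros i Hi. destruct (Nat.eqb_spec i N); auto; lia.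
  destruct (Nat.eqb_spec N j). lia. rewrite IHN by lia. ring. Qed.

Lemma part1 (N : nat) (a : nat -> nat -> nat -> R)
  (Ha_nn : forall i j k, 0 <= a i j k)
  (Ha_sm : forall i j, (i < N)%nat -> (j < N)%nat -> summable (a i j))
  (b : nat -> R) (Hb_nn : forall k, 0 <= b k) (Hb0 : b O = 0) (Hb_sum : infinite_sum b 1)
  (x0 : nat) (q : nat -> R) (Hq_nn : forall j, (j < N)%nat -> 0 <= q j)
  (f : Cplx -> nat -> Cplx)
  (Hf : forall z, Cnorm z <= 1 -> forall j, (j < N)%nat ->
      Ccv (fun n => gf (fun y => law N a b x0 q n y j) z) (f z j)) :
  forall z, Cnorm z <= 1 -> forall j, (j < N)%nat ->
  Cmul z (f z j) = Cadd (Cfsum N (fun i => Cmul (gf (a i j) z) (f z i)))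
       (Cmul (Csub (gf b z) Cone) (Cfsum N (fun i => Cmul (gf (a i j) z) (f Czero i)))).
Proof. intros z Hz j Hj.
  assert (H0 : Cnorm Czero <= 1).
  { unfold Cnorm; simpl. replace (0*0+0*0) with 0 by ring. rewrite sqrt_0; lra. }
  apply (Ccv_unique (fun n => Cmul z (gf (fun y => law N a b x0 q (S n) y j) z))).
  - apply Ccv_mul. apply (Ccv_S (fun n => gf (fun y => law N a b x0 q n y j) z)). apply Hf; auto.
  - eapply Ccv_ext. intros n. symmetry. apply gf_rec; auto. apply Cnorm_nrm; auto.
    apply Ccv_add. apply Ccv_fsum. intros i Hi. apply Ccv_mul. apply Hf; auto.
    apply Ccv_mul. apply Ccv_fsum. intros i Hi. apply Ccv_mul.
    eapply Ccv_ext; [|apply (Hf Czero H0 i Hi)]. intros n. apply gf_zero. Qed.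

Lemma matpow_nn N P : (forall i j, (i < N)%nat -> (j < N)%nat -> 0 <= P i j) ->
  forall n i j, (j < N)%nat -> 0 <= matpow N P n i j.
Proof. intros HP n. induction n; intros i j Hj; simpl.
  destruct (Nat.eqb i j); lra.
  apply fsum_nonneg. intros l Hl. apply Rmult_le_pos; auto. Qed.

Lemma inv_pow N P u : (forall j, (j < N)%nat -> fsum N (fun i => u i * P i j) = u j) ->
  forall n j, (j < N)%nat -> fsum N (fun i => u i * matpow N P n i j) = u j.
Proof. intros H n. induction n; intros j Hj; simpl.
  - rewrite <- (fsum_delta N u j Hj). apply fsum_ext_lt. intros i _.
    destruct (Nat.eqb i j); ring.
  - rewrite <- H by auto.
    rewrite (fsum_ext_lt N (fun i => u i * fsum N (fun l => matpow N P n i l * P l j))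
      (fun i => fsum N (fun l => u i * matpow N P n i l * P l j))).
    2:{ intros i _. rewrite <- fsum_scal. apply fsum_ext_lt; intros; ring. }
    rewrite fsum_swap. apply fsum_ext_lt. intros l Hl.
    rewrite <- (IHn l Hl). rewrite <- fsum_scal_r. apply fsum_ext_lt; intros; ring. Qed.

Lemma argmax N (r : nat -> R) : (0 < N)%nat -> exists k, (k < N)%nat /\ forall i, (i < N)%nat -> r i <= r k.
Proof. induction N; intros H. lia.
  destruct (Nat.eq_dec N 0). subst. exists O. split. lia. intros i Hi. replace i with O by lia. lra.
  destruct IHN as [k [Hk Hm]]. lia.
  destruct (Rle_dec (r N) (r k)).
  exists k. split. lia. intros i Hi. destruct (Nat.eq_dec i N). subst; auto. apply Hm; lia.
  exists N. split. lia. intros i Hi. destruct (Nat.eq_dec i N). subst; lra.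
  assert (r i <= r k) by (apply Hm; lia). lra. Qed.

Lemma uniq_stat N P pi w :
  (forall i j, (i < N)%nat -> (j < N)%nat -> 0 <= P i j) -> irreducible N P ->
  (forall j, (j < N)%nat -> 0 <= pi j) -> fsum N pi = 1 ->
  (forall j, (j < N)%nat -> fsum N (fun i => pi i * P i j) = pi j) ->
  (forall j, (j < N)%nat -> 0 <= w j) ->
  (forall j, (j < N)%nat -> fsum N (fun i => w i * P i j) = w j) ->
  forall j, (j < N)%nat -> w j = fsum N w * pi j.
Proof. intros HP Hirr Hpn Hps Hpi Hwn Hw.
  assert (HN : (0 < N)%nat). { destruct N. simpl in Hps. lra. lia. }
  assert (Hpos : forall j, (j < N)%nat -> 0 < pi j).
  { assert (exists i0, (i0 < N)%nat /\ 0 < pi i0) as [i0 [Hi0 Hp0]].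
    { destruct (Classical_Prop.classic (exists i0, (i0 < N)%nat /\ 0 < pi i0)) as [E|E]; auto.
      exfalso. assert (fsum N pi <= fsum N (fun _ => 0)).
      { apply fsum_le. intros i Hi. destruct (Rle_dec (pi i) 0); auto. exfalso; apply E; exists i; split; auto; lra. }
      assert (fsum N (fun _ : nat => 0) = 0) by (clear; induction N; simpl; auto; rewrite IHN; ring). lra. }
    intros j Hj. destruct (Hirr i0 j Hi0 Hj) as [n Hn].
    rewrite <- (inv_pow N P pi Hpi n j Hj).
    apply Rlt_le_trans with (pi i0 * matpow N P n i0 j). nra.
    apply (fsum_ge_term N (fun i => pi i * matpow N P n i j) i0); auto.
    intros i Hi. apply Rmult_le_pos; auto. apply matpow_nn; auto. }
  destruct (argmax N (fun i => w i / pi i) HN) as [k [Hk Hmax]].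
  set (K := w k / pi k).
  assert (HK : forall i, (i < N)%nat -> w i = K * pi i).
  { intros i Hi. destruct (Hirr i k Hi Hk) as [n Hn].
    assert (Hz : fsum N (fun l => (K * pi l - w l) * matpow N P n l k) = 0).
    { rewrite (fsum_ext_lt N _ (fun l => K * (pi l * matpow N P n l k) - w l * matpow N P n l k)) by (intros; ring).
      rewrite fsum_minus, fsum_scal, !inv_pow; auto. unfold K. field. apply Rgt_not_eq, Hpos; auto. }
    assert (Hnn : forall l, (l < N)%nat -> 0 <= (K * pi l - w l) * matpow N P n l k).
    { intros l Hl. apply Rmult_le_pos; [|apply matpow_nn; auto].
      specialize (Hmax l Hl). specialize (Hpos l Hl). fold K in Hmax.
      apply Rmult_le_compat_r with (r := pi l) in Hmax; [|lra].
      unfold Rdiv in Hmax. rewrite Rmult_assoc, Rinv_l in Hmax by lra. lra. }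
    pose proof (fsum_zero_terms N _ Hnn Hz i Hi). simpl in H.
    apply Rmult_integral in H. destruct H; lra. }
  assert (fsum N w = K).
  { rewrite (fsum_ext_lt N w (fun i => K * pi i)) by auto. rewrite fsum_scal, Hps; ring. }
  intros j Hj. rewrite H. auto. Qed.

From Stdlib Require Import ZArith.
Open Scope R_scope.

Definition Gr (c : nat -> R) (x : R) := rsum (fun k => c k * x ^ k).

Lemma Cpow_real x k : Cpow (RtoC x) k = RtoC (x ^ k).
Proof. induction k; simpl. auto. rewrite IHk. apply Cext; simpl; ring. Qed.

Lemma nrm_real x : 0 <= x <= 1 -> nrm (RtoC x) <= 1.
Proof. intros. unfold nrm; simpl. nra. Qed.

Lemma Gr_spec c x : nn c -> summable c -> 0 <= x <= 1 ->
  infinite_sum (fun k => c k * x ^ k) (Gr c x) /\ gf c (RtoC x) = RtoC (Gr c x).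
Proof. intros Hn Hs Hx. destruct (gf_CS c (RtoC x) Hn Hs (nrm_real x Hx)) as [H1 H2].
  assert (E1 : infinite_sum (fun k => c k * x ^ k) (Cre (gf c (RtoC x)))).
  { eapply IS_ext; [|exact H1]. intros k. unfold gterm. rewrite Cpow_real. simpl; ring. }
  assert (E2 : Cim (gf c (RtoC x)) = 0).
  { eapply IS_eq; [exact H2|]. eapply IS_ext; [|apply IS_zero]. intros k. unfold gterm. rewrite Cpow_real. simpl; ring. }
  assert (E3 : Gr c x = Cre (gf c (RtoC x))) by (apply rsum_eq; auto).
  split. rewrite E3; auto. apply Cext; simpl; auto. Qed.

Lemma IS_Gr c x : nn c -> summable c -> 0 <= x <= 1 -> infinite_sum (fun k => c k * x ^ k) (Gr c x).
Proof. intros. apply Gr_spec; auto. Qed.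
Lemma gf_Gr c x : nn c -> summable c -> 0 <= x <= 1 -> gf c (RtoC x) = RtoC (Gr c x).
Proof. intros. apply Gr_spec; auto. Qed.

Lemma Gr_nn c x : nn c -> summable c -> 0 <= x <= 1 -> 0 <= Gr c x.
Proof. intros. apply (IS_le (fun _ => 0) (fun k => c k * x ^ k)); auto.
  intros k. apply Rmult_le_pos; auto. apply pow_le; lra. apply IS_zero. apply IS_Gr; auto. Qed.

Lemma Gr_mono c x y : nn c -> summable c -> 0 <= x -> x <= y -> y <= 1 -> Gr c x <= Gr c y.
Proof. intros. apply (IS_le (fun k => c k * x ^ k) (fun k => c k * y ^ k)); try apply IS_Gr; auto; try lra.
  intros k. apply Rmult_le_compat_l; auto. apply pow_incr; lra. Qed.

Lemma Gr_one c S : infinite_sum c S -> nn c -> Gr c 1 = S.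
Proof. intros. apply rsum_eq. eapply IS_ext; [|exact H]. intros; rewrite pow1; ring. Qed.

Lemma pow_le1 x y : 0 <= x <= 1 -> x ^ y <= 1.
Proof. intros H. induction y; simpl. lra. assert (0 <= x ^ y) by (apply pow_le; lra). nra. Qed.

Lemma bern x y : 0 <= x <= 1 -> 0 <= 1 - x ^ y <= INR y * (1 - x).
Proof. intros Hx. induction y. simpl; lra. rewrite S_INR. simpl (x ^ S y).
  assert (0 <= x ^ y <= 1) by (split; [apply pow_le; lra| apply pow_le1; lra]).
  nra. Qed.

Lemma Gr_der c x S D : nn c -> infinite_sum c S -> infinite_sum (fun k => INR k * c k) D -> 0 <= x <= 1 ->
  0 <= S - Gr c x <= (1 - x) * D.
Proof. intros Hn HS HD Hx. assert (Hs : summable c) by (exists S; auto).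
  assert (E : infinite_sum (fun k => c k * (1 - x ^ k)) (S - Gr c x)).
  { eapply IS_ext; [|apply IS_minus; [exact HS|apply IS_Gr; auto]]. intros; simpl; ring. }
  split.
  - apply (IS_le (fun _ => 0) (fun k => c k * (1 - x ^ k)) _ _ ); [|apply IS_zero|exact E]. intros k.
    apply Rmult_le_pos; auto. apply bern; auto.
  - apply (IS_le (fun k => c k * (1 - x ^ k)) (fun k => (1 - x) * (INR k * c k)) _ _); [|exact E|apply IS_scal; auto].
    intros k. pose proof (bern x k Hx). specialize (Hn k). nra. Qed.

Definition xs (k : nat) := 1 - / (INR k + 2).

Lemma inv_cv : Un_cv (fun k => / (INR k + 1)) 0.
Proof. intros e He. destruct (archimed (/ e)) as [H1 _].
  assert (0 <= IZR (up (/e))). { pose proof (Rinv_0_lt_compat e He). lra. }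
  exists (Z.to_nat (up (/ e))). intros n Hn. unfold R_dist. rewrite Rminus_0_r.
  pose proof (pos_INR n). rewrite Rabs_pos_eq by (apply Rlt_le, Rinv_0_lt_compat; lra).
  assert (IZR (up (/ e)) <= INR n).
  { rewrite <- (Z2Nat.id (up (/e))). rewrite <- INR_IZR_INZ. apply le_INR. lia.
    apply le_IZR. auto. }
  apply Rlt_le_trans with (/ (/ e)). apply Rinv_lt_contravar.
  apply Rmult_lt_0_compat. apply Rinv_0_lt_compat; auto. lra. lra. rewrite Rinv_inv; lra. Qed.

Lemma xs_prop k : 0 < xs k < 1.
Proof. unfold xs. pose proof (pos_INR k). assert (0 < / (INR k + 2) <= /2).
  split. apply Rinv_0_lt_compat; lra. apply Rinv_le_contravar; lra. lra. Qed.

Lemma xs_mono k : xs k <= xs (S k).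
Proof. unfold xs. rewrite S_INR. pose proof (pos_INR k).
  assert (/ (INR k + 1 + 2) <= / (INR k + 2)) by (apply Rinv_le_contravar; lra). lra. Qed.

Lemma xs_cv : Un_cv xs 1.
Proof. unfold xs. assert (H : Un_cv (fun k => 1 - / (INR k + 2)) (1 - 0)).
  apply CV_minus. apply cv_const.
  pose proof (cv_S (fun k => / (INR k + 1)) 0 inv_cv) as H.
  eapply cv_ext; [|exact H]. intros n; cbv beta; rewrite S_INR. f_equal; ring.
  replace (1 - 0) with 1 in H by ring. exact H. Qed.

Lemma cv_pow u l y : Un_cv u l -> Un_cv (fun k => u k ^ y) (l ^ y).
Proof. intros H. induction y; simpl. apply cv_const. apply CV_mult; auto. Qed.

Lemma IS_ge_partial u U n : nn u -> infinite_sum u U -> sum_f_R0 u n <= U.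
Proof. intros Hn HU. apply (@Rle_cv_lim (fun _ => sum_f_R0 u n) (fun m => sum_f_R0 u (n + m))).
  intros m. induction m. rewrite Nat.add_0_r; lra. rewrite Nat.add_succ_r. simpl. specialize (Hn (S (n + m))). lra.
  apply cv_const. intros e He. destruct (HU e He) as [M HM]. exists M. intros; apply HM; lia. Qed.

Lemma cv_finite Y (g : nat -> nat -> R) (w : nat -> R) :
  (forall y, Un_cv (fun k => g k y) (w y)) -> Un_cv (fun k => sum_f_R0 (g k) Y) (sum_f_R0 w Y).
Proof. intros H. eapply cv_ext. intros k. apply fsum_sum_f_R0. rewrite <- fsum_sum_f_R0.
  apply (cv_fsum (S Y) (fun y k => g k y)). intros; auto. Qed.

Lemma dom_cv (g : nat -> nat -> R) (w : nat -> R) (W : R) (G : nat -> R) :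
  (forall k y, 0 <= g k y <= w y) -> infinite_sum w W ->
  (forall y, Un_cv (fun k => g k y) (w y)) -> (forall k, infinite_sum (g k) (G k)) ->
  Un_cv G W.
Proof. intros Hb HW Hc HG e He.
  destruct (HW (e/3)) as [Y HY]. lra.
  specialize (HY Y (le_n _)). unfold R_dist in HY.
  assert (Hpw : sum_f_R0 w Y <= W). { apply IS_ge_partial; auto. intros k. pose proof (Hb O k); lra. }
  destruct (cv_finite Y g w Hc (e/3)) as [K HK]. lra.
  exists K. intros k Hk. specialize (HK k Hk). unfold R_dist in *.
  assert (Hpg : sum_f_R0 (g k) Y <= G k). { apply IS_ge_partial; auto. intros y; apply Hb. }
  assert (Hd : sum_f_R0 (fun y => w y - g k y) Y <= W - G k).
  { apply IS_ge_partial. intros y; pose proof (Hb k y); lra. apply IS_minus; auto. }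
  rewrite minus_sum in Hd.
  rewrite Rabs_left1 in HY by lra. apply Rabs_def2 in HK. apply Rabs_def1; lra. Qed.

Lemma abel c S : nn c -> infinite_sum c S -> Un_cv (fun k => Gr c (xs k)) S.
Proof. intros Hn HS. assert (Hs : summable c) by (exists S; auto).
  apply (dom_cv (fun k y => c y * xs k ^ y) c S).
  - intros k y. pose proof (xs_prop k). split. apply Rmult_le_pos; auto. apply pow_le; lra.
    apply Rle_trans with (c y * 1); [apply Rmult_le_compat_l; auto; apply pow_le1; lra | lra].
  - auto.
  - intros y. assert (H := cv_scal (c y) _ _ (cv_pow _ _ y xs_cv)). rewrite pow1, Rmult_1_r in H. exact H.
  - intros k. apply IS_Gr; auto. pose proof (xs_prop k); lra. Qed.

Definition geo (x : R) (y : nat) := fsum y (fun t => x ^ t).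

Lemma geo_id x y : (1 - x) * geo x y = 1 - x ^ y.
Proof. unfold geo. induction y; simpl. ring. rewrite Rmult_plus_distr_l, IHy. ring. Qed.

Lemma geo_bd x y : 0 <= x <= 1 -> 0 <= geo x y <= INR y.
Proof. intros Hx. unfold geo. induction y. simpl; lra. rewrite S_INR. simpl (fsum (S y) _).
  assert (0 <= x ^ y <= 1) by (split; [apply pow_le; lra| apply pow_le1; lra]). lra. Qed.

Lemma der_cv c S D : nn c -> infinite_sum c S -> infinite_sum (fun k => INR k * c k) D ->
  Un_cv (fun k => (S - Gr c (xs k)) / (1 - xs k)) D.
Proof. intros Hn HS HD. assert (Hs : summable c) by (exists S; auto).
  apply (dom_cv (fun k y => c y * geo (xs k) y) (fun y => INR y * c y) D).
  - intros k y. pose proof (xs_prop k). pose proof (geo_bd (xs k) y). specialize (Hn y). split; nra.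
  - auto.
  - intros y. rewrite Rmult_comm. apply cv_scal. unfold geo.
    replace (INR y) with (fsum y (fun t => 1 ^ t)).
    apply (cv_fsum y (fun t k => xs k ^ t)). intros; apply cv_pow, xs_cv.
    clear. induction y. simpl; auto. rewrite S_INR, <- IHy. simpl (fsum (S y) _). rewrite pow1; ring.
  - intros k. pose proof (xs_prop k).
    replace ((S - Gr c (xs k)) / (1 - xs k)) with (/ (1 - xs k) * (S - Gr c (xs k))) by (unfold Rdiv; ring).
    eapply IS_ext; [|apply (IS_scal (/ (1 - xs k))); apply IS_minus; [exact HS|apply (IS_Gr c (xs k)); auto; lra]].
    intros y. simpl. replace (geo (xs k) y) with ((1 - xs k ^ y) / (1 - xs k)).
    field. lra. rewrite <- geo_id. field. lra. Qed.

Lemma Cnorm_real x : 0 <= x <= 1 -> Cnorm (RtoC x) <= 1.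
Proof. intros H. unfold Cnorm; simpl. rewrite <- sqrt_1. apply sqrt_le_1_alt. nra. Qed.

Lemma RtoC_mul u v : Cmul (RtoC u) (RtoC v) = RtoC (u * v).
Proof. apply Cext; simpl; ring. Qed.
Lemma RtoC_add u v : Cadd (RtoC u) (RtoC v) = RtoC (u + v).
Proof. apply Cext; simpl; ring. Qed.
Lemma RtoC_sub1 u : Csub (RtoC u) Cone = RtoC (u - 1).
Proof. apply Cext; simpl; ring. Qed.
Lemma Cfsum_RtoC N u : Cfsum N (fun i => RtoC (u i)) = RtoC (fsum N u).
Proof. induction N; simpl. auto. rewrite IHN. apply RtoC_add. Qed.
Lemma RtoC_inj u v : RtoC u = RtoC v -> u = v.
Proof. intros H. apply (f_equal Cre) in H. simpl in H. auto. Qed.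

Definition mlim (u : nat -> R) := epsilon (inhabits 0) (fun l => Un_cv u l).
Lemma mlim_spec u : (exists l, Un_cv u l) -> Un_cv u (mlim u).
Proof. intros H. unfold mlim. apply epsilon_spec. auto. Qed.

Section P2.
Variables (N : nat) (a : nat -> nat -> nat -> R) (b : nat -> R) (x0 : nat) (q : nat -> R)
  (f : Cplx -> nat -> Cplx) (pi : nat -> R).
Hypothesis Ha_nn : forall i j k, 0 <= a i j k.
Hypothesis Ha_sm : forall i j, (i < N)%nat -> (j < N)%nat -> summable (a i j).
Hypothesis Hstoch : forall i, (i < N)%nat -> fsum N (fun j => rsum (a i j)) = 1.
Hypothesis Hirr : irreducible N (fun i j => rsum (a i j)).
Hypothesis Hpi_nn : forall j, (j < N)%nat -> 0 <= pi j.
Hypothesis Hpi_sum : fsum N pi = 1.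
Hypothesis Hpi_stat : forall j, (j < N)%nat -> fsum N (fun i => pi i * rsum (a i j)) = pi j.
Hypothesis Hal : forall i j, (i < N)%nat -> (j < N)%nat -> summable (fun k => INR k * a i j k).
Hypothesis Hb_nn : forall k, 0 <= b k.
Hypothesis Hb0 : b O = 0.
Hypothesis Hb_sum : infinite_sum b 1.
Hypothesis Hq_nn : forall j, (j < N)%nat -> 0 <= q j.
Hypothesis Hq_sum : fsum N q = 1.
Hypothesis Hf : forall z, Cnorm z <= 1 -> forall j, (j < N)%nat ->
      Ccv (fun n => gf (fun y => law N a b x0 q n y j) z) (f z j).
Hypothesis HEB : summable (fun k => INR k * b k).

Notation L n y j := (law N a b x0 q n y j).
Definition P i j := rsum (a i j).
Definition al i j := rsum (fun k => INR k * a i j k).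
Definition EB := rsum (fun k => INR k * b k).
Definition A i j x := Gr (a i j) x.
Definition Bx x := Gr b x.
Definition F n i x := Gr (fun y => L n y i) x.
Definition ell n i := L n O i.
Definition p n i := F n i 1.
Definition fr i x := Cre (f (RtoC x) i).

Lemma sm_b : summable b. Proof. exists 1; auto. Qed.
Lemma L_nn n i : (i < N)%nat -> nn (fun y => L n y i).
Proof. intros. apply law_nn'; auto. Qed.
Lemma L_sm n i : (i < N)%nat -> summable (fun y => L n y i).
Proof. intros. apply law_sm; auto. Qed.

Lemma P_IS i j : (i < N)%nat -> (j < N)%nat -> infinite_sum (a i j) (P i j).
Proof. intros. destruct (Ha_sm i j) as [s Hs]; auto. unfold P. rewrite (rsum_eq _ s); auto. Qed.
Lemma al_IS i j : (i < N)%nat -> (j < N)%nat -> infinite_sum (fun k => INR k * a i j k) (al i j).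
Proof. intros. destruct (Hal i j) as [s Hs]; auto. unfold al. rewrite (rsum_eq _ s); auto. Qed.
Lemma EB_IS : infinite_sum (fun k => INR k * b k) EB.
Proof. destruct HEB as [s Hs]. unfold EB. rewrite (rsum_eq _ s); auto. Qed.

Lemma fr_prop i x : (i < N)%nat -> 0 <= x <= 1 ->
  f (RtoC x) i = RtoC (fr i x) /\ Un_cv (fun n => F n i x) (fr i x).
Proof. intros Hi Hx. destruct (Hf (RtoC x) (Cnorm_real x Hx) i Hi) as [H1 H2].
  assert (E : forall n, gf (fun y => L n y i) (RtoC x) = RtoC (F n i x)).
  { intros n. unfold F. apply gf_Gr; auto. apply L_nn; auto. apply L_sm; auto. }
  split.
  - apply Cext. auto. simpl. symmetry. apply (UL_sequence (fun _ => 0)). apply cv_const.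
    eapply cv_ext; [|exact H2]. intros n. simpl. rewrite E. auto.
  - eapply cv_ext; [|exact H1]. intros n. simpl. rewrite E. auto. Qed.

Lemma rec_real n j x : (j < N)%nat -> 0 <= x <= 1 ->
  x * F (S n) j x = fsum N (fun i => A i j x * F n i x) + (Bx x - 1) * fsum N (fun i => A i j x * ell n i).
Proof. intros Hj Hx. pose proof (gf_rec N a b x0 q Ha_nn Ha_sm Hb_nn Hb0 Hb_sum Hq_nn n j (RtoC x) Hj (nrm_real x Hx)) as H.

  rewrite (gf_Gr (fun y => L (S n) y j)) in H by (auto; try apply L_nn; try apply L_sm; auto).
  rewrite (Cfsum_ext_lt N _ (fun i => RtoC (A i j x * F n i x))) in H.
  2:{ intros i Hi. unfold A, F. rewrite !gf_Gr; auto. apply RtoC_mul. apply L_nn; auto. apply L_sm; auto. intros k; auto. }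
  rewrite (Cfsum_ext_lt N (fun i => Cmul (gf (a i j) (RtoC x)) (RtoC (L n O i))) (fun i => RtoC (A i j x * ell n i))) in H.
  2:{ intros i Hi. unfold A, ell. rewrite !gf_Gr; auto. apply RtoC_mul. intros k; auto. }
  unfold Bx. rewrite gf_Gr in H; auto. 2: apply sm_b.
  rewrite !Cfsum_RtoC, RtoC_sub1, !RtoC_mul, RtoC_add in H. apply RtoC_inj in H. auto. Qed.

Lemma key_real j x : (j < N)%nat -> 0 <= x <= 1 ->
  x * fr j x = fsum N (fun i => A i j x * fr i x) + (Bx x - 1) * fsum N (fun i => A i j x * fr i 0).
Proof. intros Hj Hx.
  pose proof (part1 N a Ha_nn Ha_sm b Hb_nn Hb0 Hb_sum x0 q Hq_nn f Hf (RtoC x) (Cnorm_real x Hx) j Hj) as H.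
  change Czero with (RtoC 0) in H.
  assert (H0 : (0 <= 0 <= 1)) by lra.
  rewrite (Cfsum_ext_lt N _ (fun i => RtoC (A i j x * fr i x))) in H.
  2:{ intros i Hi. unfold A. rewrite gf_Gr; auto. rewrite (proj1 (fr_prop i x Hi Hx)). apply RtoC_mul. intros k; auto. }
  rewrite (Cfsum_ext_lt N (fun i => Cmul (gf (a i j) (RtoC x)) (f (RtoC 0) i)) (fun i => RtoC (A i j x * fr i 0))) in H.
  2:{ intros i Hi. unfold A. rewrite gf_Gr; auto. rewrite (proj1 (fr_prop i 0 Hi H0)). apply RtoC_mul. intros k; auto. }
  rewrite (proj1 (fr_prop j x Hj Hx)) in H.
  unfold Bx. rewrite gf_Gr in H; auto. 2: apply sm_b.
  rewrite !Cfsum_RtoC, RtoC_sub1, !RtoC_mul, RtoC_add in H. apply RtoC_inj in H. auto. Qed.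

Lemma P_nn i j : (i < N)%nat -> (j < N)%nat -> 0 <= P i j.
Proof. intros. apply (IS_le (fun _ => 0) (a i j)); auto. apply IS_zero. apply P_IS; auto. Qed.

Lemma A_one i j : (i < N)%nat -> (j < N)%nat -> A i j 1 = P i j.
Proof. intros. unfold A. apply Gr_one. apply P_IS; auto. intros k; auto. Qed.
Lemma Bx_one : Bx 1 = 1.
Proof. unfold Bx. apply Gr_one; auto. Qed.

Lemma p_rec n j : (j < N)%nat -> p (S n) j = fsum N (fun i => P i j * p n i).
Proof. intros Hj. pose proof (rec_real n j 1 Hj ltac:(lra)) as H. rewrite Bx_one in H.
  unfold p. rewrite (fsum_ext_lt N (fun i => A i j 1 * F n i 1) (fun i => P i j * F n i 1)) in H.
  lra. intros i Hi; rewrite A_one; auto. Qed.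

Lemma p_nn n i : (i < N)%nat -> 0 <= p n i.
Proof. intros. unfold p, F. apply Gr_nn. apply L_nn; auto. apply L_sm; auto. lra. Qed.

Lemma p0 j : (j < N)%nat -> p O j = q j.
Proof. intros Hj. unfold p, F. apply Gr_one. eapply IS_ext; [|apply (IS_single x0 (q j))].
  intros k. simpl. auto. apply L_nn; auto. Qed.

Lemma p_sum n : fsum N (p n) = 1.
Proof. induction n. rewrite <- Hq_sum. apply fsum_ext_lt. intros; apply p0; auto.
  rewrite (fsum_ext_lt N (p (S n)) (fun j => fsum N (fun i => P i j * p n i))) by (intros; apply p_rec; auto).
  rewrite fsum_swap. rewrite <- IHn. apply fsum_ext_lt. intros i Hi.
  rewrite fsum_scal_r. unfold P. rewrite Hstoch; auto. ring. Qed.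

Lemma p_cv j : (j < N)%nat -> Un_cv (fun n => p n j) (fr j 1).
Proof. intros Hj. apply (fr_prop j 1 Hj). lra. Qed.

Lemma v_pi j : (j < N)%nat -> fr j 1 = pi j.
Proof. intros Hj.
  assert (Hvn : forall i, (i < N)%nat -> 0 <= fr i 1).
  { intros i Hi. apply (@Rle_cv_lim (fun _ => 0) (fun n => p n i)). intros; apply p_nn; auto. apply cv_const. apply p_cv; auto. }
  assert (Hvs : fsum N (fun i => fr i 1) = 1).
  { apply (UL_sequence (fun n => fsum N (fun i => p n i))). apply cv_fsum. intros; apply p_cv; auto.
    eapply cv_ext; [|apply (cv_const 1)]. intros n. rewrite <- (p_sum n). auto. }
  assert (Hvp : forall j, (j < N)%nat -> fsum N (fun i => fr i 1 * rsum (a i j)) = fr j 1).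
  { intros j' Hj'. apply (UL_sequence (fun n => p (S n) j')).
    eapply cv_ext. intros n; symmetry; apply p_rec; auto. apply cv_fsum. intros i Hi.
    rewrite Rmult_comm. apply cv_scal. apply p_cv; auto.
    apply (cv_S (fun n => p n j')). apply p_cv; auto. }
  rewrite (uniq_stat N (fun i j => rsum (a i j)) pi (fun i => fr i 1)); auto.
  rewrite Hvs; ring. intros; apply P_nn; auto. Qed.

Lemma fr_nn i x : (i < N)%nat -> 0 <= x <= 1 -> 0 <= fr i x.
Proof. intros Hi Hx. apply (@Rle_cv_lim (fun _ => 0) (fun n => F n i x)).
  intros n. unfold F. apply Gr_nn; auto. apply L_nn; auto. apply L_sm; auto.
  apply cv_const. apply fr_prop; auto. Qed.

Lemma fr_mono i x y : (i < N)%nat -> 0 <= x -> x <= y -> y <= 1 -> fr i x <= fr i y.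
Proof. intros Hi H1 H2 H3. apply (@Rle_cv_lim (fun n => F n i x) (fun n => F n i y)).
  intros n. unfold F. apply Gr_mono; auto. apply L_nn; auto. apply L_sm; auto.
  apply fr_prop; auto; lra. apply fr_prop; auto; lra. Qed.

Lemma fr_le_pi i x : (i < N)%nat -> 0 <= x <= 1 -> fr i x <= pi i.
Proof. intros Hi Hx. rewrite <- v_pi; auto. apply fr_mono; auto; lra. Qed.

Definition m i := mlim (fun k => fr i (xs k)).

Lemma m_cv i : (i < N)%nat -> Un_cv (fun k => fr i (xs k)) (m i).
Proof. intros Hi. apply mlim_spec.
  assert (G : Un_growing (fun k => fr i (xs k))).
  { intros n. pose proof (xs_prop n). pose proof (xs_prop (S n)). apply fr_mono; auto; try lra. apply xs_mono. }
  assert (U : has_ub (fun k => fr i (xs k))).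
  { exists (pi i). intros r [k Hk]. subst. pose proof (xs_prop k). apply fr_le_pi; auto; lra. }
  destruct (growing_cv _ G U) as [l Hl]. exists l; auto. Qed.

Lemma m_le_pi i : (i < N)%nat -> m i <= pi i.
Proof. intros Hi. apply (@Rle_cv_lim (fun k => fr i (xs k)) (fun _ => pi i)).
  intros k. pose proof (xs_prop k). apply fr_le_pi; auto; lra. apply m_cv; auto. apply cv_const. Qed.

Lemma A_cv i j : (i < N)%nat -> (j < N)%nat -> Un_cv (fun k => A i j (xs k)) (P i j).
Proof. intros. unfold A. apply abel. intros k; auto. apply P_IS; auto. Qed.
Lemma Bx_cv : Un_cv (fun k => Bx (xs k)) 1.
Proof. unfold Bx. apply abel; auto. Qed.

Lemma mP j : (j < N)%nat -> fsum N (fun i => m i * P i j) = m j.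
Proof. intros Hj.
  apply (UL_sequence (fun k => xs k * fr j (xs k))).
  - eapply cv_ext. intros k. symmetry. apply key_real; auto. pose proof (xs_prop k); lra.
    replace (fsum N (fun i => m i * P i j)) with (fsum N (fun i => P i j * m i) + (1 - 1) * fsum N (fun i => P i j * fr i 0)).
    apply CV_plus. apply cv_fsum. intros i Hi. apply CV_mult. apply A_cv; auto. apply m_cv; auto.
    apply CV_mult. apply CV_minus. apply Bx_cv. apply cv_const.
    apply cv_fsum. intros i Hi. apply CV_mult. apply A_cv; auto. apply cv_const.
    replace (1 - 1) with 0 by ring. rewrite Rmult_0_l, Rplus_0_r. apply fsum_ext_lt; intros; ring.
  - assert (H := CV_mult _ _ _ _ xs_cv (m_cv j Hj)). rewrite Rmult_1_l in H. exact H. Qed.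

Definition Ai i x := fsum N (fun j => A i j x).
Definition alpha i := fsum N (fun j => al i j).

Lemma summed_key x : 0 <= x <= 1 ->
  x * fsum N (fun i => fr i x) = fsum N (fun i => fr i x * Ai i x) + (Bx x - 1) * fsum N (fun i => fr i 0 * Ai i x).
Proof. intros Hx.
  assert (E1 : fsum N (fun j => fsum N (fun i => A i j x * fr i x)) = fsum N (fun i => fr i x * Ai i x)).
  { rewrite fsum_swap. apply fsum_ext_lt; intros i Hi. unfold Ai. rewrite <- fsum_scal. apply fsum_ext_lt; intros; ring. }
  assert (E2 : fsum N (fun j => fsum N (fun i => A i j x * fr i 0)) = fsum N (fun i => fr i 0 * Ai i x)).
  { rewrite fsum_swap. apply fsum_ext_lt; intros i Hi. unfold Ai. rewrite <- fsum_scal. apply fsum_ext_lt; intros; ring. }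
  rewrite <- fsum_scal. rewrite (fsum_ext_lt N _ (fun j => fsum N (fun i => A i j x * fr i x) + (Bx x - 1) * fsum N (fun i => A i j x * fr i 0)))
    by (intros; apply key_real; auto).
  rewrite fsum_plus, fsum_scal, E1, E2. auto. Qed.

Lemma Ai_1 i x : (i < N)%nat -> 0 <= x < 1 -> 1 - Ai i x = (1 - x) * fsum N (fun j => (P i j - A i j x) / (1 - x)).
Proof. intros Hi Hx. rewrite <- fsum_scal. replace (1 - Ai i x) with (fsum N (fun j => rsum (a i j)) - Ai i x) by (rewrite Hstoch; auto). unfold Ai. rewrite <- fsum_minus.
  apply fsum_ext_lt. intros; unfold P; field; lra. Qed.

Lemma div_key x : 0 <= x < 1 ->
  fsum N (fun i => fr i x) = fsum N (fun i => fr i x * fsum N (fun j => (P i j - A i j x) / (1 - x)))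
     + (1 - Bx x) / (1 - x) * fsum N (fun i => fr i 0 * Ai i x).
Proof. intros Hx. pose proof (summed_key x ltac:(lra)) as E.
  rewrite (fsum_ext_lt N (fun i => fr i x * fsum N _) (fun i => (fr i x - fr i x * Ai i x) / (1 - x))).
  2:{ intros i Hi. apply (Rmult_eq_reg_l (1 - x)); [|lra]. rewrite (Rmult_comm (fr i x)), <- Rmult_assoc, <- Ai_1; auto. field. lra. }
  rewrite (fsum_ext_lt N (fun i => (fr i x - fr i x * Ai i x) / (1 - x)) (fun i => (fr i x - fr i x * Ai i x) * / (1 - x))) by (intros; unfold Rdiv; auto).
  rewrite fsum_scal_r, fsum_minus.
  set (h := fsum N (fun i => fr i x)) in *. set (T := fsum N (fun i => fr i x * Ai i x)) in *.
  set (S2 := fsum N (fun i => fr i 0 * Ai i x)) in *.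
  assert (T = x * h - (Bx x - 1) * S2) by lra. rewrite H. field. lra. Qed.

Definition M := fsum N m.
Definition sz := fsum N (fun i => fr i 0).

Lemma lim_eq : M = fsum N (fun i => m i * alpha i) + EB * sz.
Proof.
  apply (UL_sequence (fun k => fsum N (fun i => fr i (xs k)))).
  - apply cv_fsum. intros; apply m_cv; auto.
  - eapply cv_ext. intros k. symmetry. apply div_key. pose proof (xs_prop k); lra.
    apply CV_plus. apply cv_fsum. intros i Hi. apply CV_mult. apply m_cv; auto.
    apply cv_fsum. intros j Hj. apply der_cv. intros k; auto. apply P_IS; auto. apply al_IS; auto.
    apply CV_mult. apply der_cv; auto. apply EB_IS.
    replace sz with (fsum N (fun i => fr i 0 * 1)) by (unfold sz; apply fsum_ext_lt; intros; ring).
    apply cv_fsum. intros i Hi.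
    apply CV_mult. apply cv_const. rewrite <- (Hstoch i Hi). unfold Ai. apply cv_fsum. intros j Hj. apply A_cv; auto. Qed.

Lemma m_pi i : (i < N)%nat -> m i = M * pi i.
Proof. intros Hi.
  assert (W := uniq_stat N (fun i j => rsum (a i j)) pi (fun i => pi i - m i)).
  assert (pi i - m i = fsum N (fun i => pi i - m i) * pi i).
  { apply W; auto. intros; apply P_nn; auto. intros j Hj. pose proof (m_le_pi j Hj); lra.
    intros j Hj. rewrite (fsum_ext_lt N _ (fun i => pi i * rsum (a i j) - m i * P i j)) by (intros; unfold P; ring).
    rewrite fsum_minus, Hpi_stat, mP; auto. }
  rewrite fsum_minus, Hpi_sum in H. fold M in H. nra. Qed.

Definition H n x := fsum N (fun j => F n j x).
Definition T n x := 1 - H n x.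
Definition ellS n := fsum N (ell n).
Definition dd n := -1 + fsum N (fun i => alpha i * p n i) + EB * ellS n.

Lemma F_nn n i x : (i < N)%nat -> 0 <= x <= 1 -> 0 <= F n i x.
Proof. intros. unfold F. apply Gr_nn; auto. apply L_nn; auto. apply L_sm; auto. Qed.
Lemma F_le_p n i x : (i < N)%nat -> 0 <= x <= 1 -> F n i x <= p n i.
Proof. intros. unfold p, F. apply Gr_mono; auto; try lra. apply L_nn; auto. apply L_sm; auto. Qed.
Lemma H_le1 n x : 0 <= x <= 1 -> H n x <= 1.
Proof. intros. unfold H. rewrite <- (p_sum n). apply fsum_le. intros; apply F_le_p; auto. Qed.

Lemma F0 j x : (j < N)%nat -> 0 <= x <= 1 -> F O j x = q j * x ^ x0.
Proof. intros Hj Hx. unfold F, Gr. apply rsum_eq. eapply IS_ext; [|apply (IS_single x0 (q j * x ^ x0))].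
  intros k. simpl. destruct (Nat.eqb_spec k x0). subst; auto. ring. Qed.

Lemma T0 x : 0 <= x <= 1 -> T O x <= INR x0 * (1 - x).
Proof. intros Hx. unfold T, H. rewrite (fsum_ext_lt N _ (fun j => x ^ x0 * q j)).
  rewrite fsum_scal, Hq_sum, Rmult_1_r. apply bern; auto.
  intros; rewrite F0; auto; ring. Qed.

Lemma Ai_bounds i x : (i < N)%nat -> 0 <= x <= 1 -> 0 <= 1 - Ai i x <= (1 - x) * alpha i.
Proof. intros Hi Hx. replace (1 - Ai i x) with (fsum N (fun j => P i j - A i j x)).
  2:{ rewrite fsum_minus. unfold P, Ai. rewrite Hstoch; auto. }
  unfold alpha. rewrite <- fsum_scal. split.
  apply fsum_nonneg. intros j Hj. apply (Gr_der (a i j) x (P i j) (al i j)); auto. intros k; auto. apply P_IS; auto. apply al_IS; auto.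
  apply fsum_le. intros j Hj. apply (Gr_der (a i j) x (P i j) (al i j)); auto. intros k; auto. apply P_IS; auto. apply al_IS; auto. Qed.

Lemma Bx_bounds x : 0 <= x <= 1 -> 0 <= 1 - Bx x <= (1 - x) * EB.
Proof. intros. apply (Gr_der b x 1 EB); auto. apply EB_IS. Qed.

Lemma Ai_nn i x : (i < N)%nat -> 0 <= x <= 1 -> 0 <= Ai i x.
Proof. intros. unfold Ai. apply fsum_nonneg. intros. unfold A. apply Gr_nn; auto. intros k; auto. Qed.

Lemma summed_rec n x : 0 <= x <= 1 ->
  x * H (S n) x = fsum N (fun i => Ai i x * F n i x) + (Bx x - 1) * fsum N (fun i => Ai i x * ell n i).
Proof. intros Hx.
  assert (E1 : fsum N (fun j => fsum N (fun i => A i j x * F n i x)) = fsum N (fun i => Ai i x * F n i x)).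
  { rewrite fsum_swap. apply fsum_ext_lt; intros i Hi. unfold Ai. rewrite <- fsum_scal_r. auto. }
  assert (E2 : fsum N (fun j => fsum N (fun i => A i j x * ell n i)) = fsum N (fun i => Ai i x * ell n i)).
  { rewrite fsum_swap. apply fsum_ext_lt; intros i Hi. unfold Ai. rewrite <- fsum_scal_r. auto. }
  unfold H. rewrite <- fsum_scal. rewrite (fsum_ext_lt N _ (fun j => fsum N (fun i => A i j x * F n i x) + (Bx x - 1) * fsum N (fun i => A i j x * ell n i)))
    by (intros; apply rec_real; auto).
  rewrite fsum_plus, fsum_scal, E1, E2. auto. Qed.

Lemma ell_nn n i : (i < N)%nat -> 0 <= ell n i.
Proof. intros. unfold ell. apply law_nn; auto. Qed.

Lemma step n x : 0 <= x <= 1 ->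
  H n x - x * H (S n) x <= (1 - x) * (fsum N (fun i => alpha i * p n i) + EB * ellS n).
Proof. intros Hx. rewrite summed_rec; auto.
  replace (H n x - (fsum N (fun i => Ai i x * F n i x) + (Bx x - 1) * fsum N (fun i => Ai i x * ell n i)))
    with (fsum N (fun i => (1 - Ai i x) * F n i x) + (1 - Bx x) * fsum N (fun i => Ai i x * ell n i)).
  2:{ unfold H. rewrite (fsum_ext_lt N (fun i => (1 - Ai i x) * F n i x) (fun i => F n i x - Ai i x * F n i x)) by (intros; ring).
      rewrite fsum_minus. ring. }
  rewrite Rmult_plus_distr_l. apply Rplus_le_compat.
  - rewrite <- fsum_scal. apply fsum_le. intros i Hi.
    pose proof (Ai_bounds i x Hi Hx). pose proof (F_nn n i x Hi Hx). pose proof (F_le_p n i x Hi Hx). nra.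
  - assert (0 <= fsum N (fun i => Ai i x * ell n i) <= ellS n).
    { unfold ellS. split. apply fsum_nonneg. intros. apply Rmult_le_pos. apply Ai_nn; auto. apply ell_nn; auto.
      apply fsum_le. intros i Hi. pose proof (Ai_bounds i x Hi Hx). pose proof (ell_nn n i Hi).
      pose proof (Ai_nn i x Hi Hx). pose proof (alpha i). nra. }
    pose proof (Bx_bounds x Hx). nra. Qed.

Lemma fsum_telescope n u : fsum n (fun m => u (S m) - u m) = u n - u O.
Proof. induction n; simpl. ring. rewrite IHn. ring. Qed.

Lemma drift_x n x : 0 <= x < 1 -> - INR x0 <= fsum n dd + fsum n (fun m => T (S m) x).
Proof. intros Hx.
  assert (Hs : forall m, T (S m) x - T m x <= (1 - x) * (dd m + T (S m) x)).
  { intros m. pose proof (step m x ltac:(lra)). unfold T, dd. nra. }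
  assert (Htel : T n x - T O x <= (1 - x) * (fsum n dd + fsum n (fun m => T (S m) x))).
  { rewrite <- (fsum_telescope n (fun m => T m x)). rewrite <- fsum_plus, <- fsum_scal.
    apply fsum_le. intros; auto. }
  pose proof (T0 x ltac:(lra)). assert (0 <= T n x) by (unfold T; pose proof (H_le1 n x ltac:(lra)); lra).
  assert ((1 - x) * (- INR x0) <= (1 - x) * (fsum n dd + fsum n (fun m => T (S m) x))) by nra.
  apply Rmult_le_reg_l in H2; lra. Qed.

Lemma IS_p n j : (j < N)%nat -> infinite_sum (fun y => L n y j) (p n j).
Proof. intros Hj. eapply IS_ext; [|apply (IS_Gr (fun y => L n y j) 1)]. intros; simpl; rewrite pow1; ring.
  apply L_nn; auto. apply L_sm; auto. lra. Qed.

Lemma drift n : - INR x0 <= fsum n dd.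
Proof.
  assert (C : Un_cv (fun k => fsum n (fun m => T (S m) (xs k))) (fsum n (fun _ => 0))).
  { apply (cv_fsum n (fun m k => T (S m) (xs k))). intros m _. unfold T.
    replace 0 with (1 - fsum N (p (S m))) by (rewrite p_sum; ring).
    apply CV_minus. apply cv_const. apply cv_fsum. intros j Hj. unfold F. apply abel. apply L_nn; auto. apply IS_p; auto. }
  assert (Z : fsum n (fun _ : nat => 0) = 0) by (clear; induction n; simpl; auto; rewrite IHn; ring).
  rewrite Z in C.
  assert (- INR x0 - fsum n dd <= 0).
  { apply (@Rle_cv_lim (fun _ => - INR x0 - fsum n dd) (fun k => fsum n (fun m => T (S m) (xs k)))); auto.
    intros k. pose proof (xs_prop k) as X1. assert (X2 : 0 <= xs k < 1) by lra. pose proof (drift_x n (xs k) X2) as D1. lra.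
    apply cv_const. }
  lra. Qed.

Lemma Gr_zero c : Gr c 0 = c O.
Proof. unfold Gr. apply rsum_eq.
  assert (X := IS_head (fun k => c k * 0 ^ k) ltac:(intros; simpl; ring)).
  cbv beta in X. replace (c O * 0 ^ 0) with (c O) in X by (simpl; ring). exact X. Qed.

Lemma ell_cv i : (i < N)%nat -> Un_cv (fun n => ell n i) (fr i 0).
Proof. intros Hi. eapply cv_ext; [|apply (fr_prop i 0 Hi ltac:(lra))]. intros n. unfold F. rewrite Gr_zero. auto. Qed.

Definition rho' := fsum N (fun i => alpha i * pi i).

Lemma dd_cv : Un_cv dd (-1 + rho' + EB * sz).
Proof. unfold dd. apply CV_plus. apply CV_plus. apply cv_const.
  apply cv_fsum. intros i Hi. apply cv_scal. rewrite <- v_pi; auto. apply p_cv; auto.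
  apply cv_scal. apply cv_fsum. intros; apply ell_cv; auto. Qed.

Lemma final_ineq : 0 <= -1 + rho' + EB * sz.
Proof.
  pose proof (Cesaro_1 dd _ dd_cv) as C. apply cv_S in C.
  apply (@Rle_cv_lim (fun n => - INR x0 * / (INR n + 1)) (fun n => sum_f_R0 dd (Init.Nat.pred (S n)) / INR (S n))).
  - intros n. simpl (Init.Nat.pred (S n)). rewrite <- fsum_sum_f_R0. rewrite S_INR.
    pose proof (drift (S n)). pose proof (pos_INR n). unfold Rdiv.
    apply Rmult_le_compat_r. left; apply Rinv_0_lt_compat; lra. auto.
  - replace 0 with (- INR x0 * 0) by ring. apply cv_scal. apply inv_cv.
  - exact C. Qed.

Lemma EB_ge1 : 1 <= EB.
Proof. apply (IS_le b (fun k => INR k * b k)); auto. 2: apply EB_IS.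
  intros [|k]. rewrite Hb0; simpl; lra. rewrite S_INR. pose proof (pos_INR k). pose proof (Hb_nn (S k)). nra. Qed.

Lemma sz_value : rho' < 1 -> sz = (1 - rho') / EB.
Proof. intros Hr. pose proof lim_eq as E. pose proof final_ineq as Fi. pose proof EB_ge1.
  rewrite (fsum_ext_lt N _ (fun i => M * (alpha i * pi i))) in E by (intros; rewrite m_pi; auto; ring).
  rewrite fsum_scal in E. fold rho' in E.
  assert (HM : M <= 1). { unfold M. rewrite <- Hpi_sum. apply fsum_le. intros; apply m_le_pi; auto. }
  assert (K1 : EB * sz = M * (1 - rho')) by lra.
  assert (K2 : M >= 1) by nra.
  assert (K3 : M = 1) by lra.
  assert (K4 : EB * sz = 1 - rho') by (rewrite K1, K3; ring).
  replace sz with (EB * sz / EB) by (field; lra). rewrite K4. reflexivity. Qed.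

End P2.

Theorem mainTheorem10
  (N : nat) (HN : (2 <= N)%nat)
  (a : nat -> nat -> nat -> R)
  (Ha_nonneg : forall i j k, 0 <= a i j k)
  (Ha_sum : forall i j, (i < N)%nat -> (j < N)%nat -> exists s, infinite_sum (a i j) s)
  (Hstoch : forall i, (i < N)%nat -> fsum N (fun j => rsum (a i j)) = 1)
  (Hirr : irreducible N (fun i j => rsum (a i j)))
  (pi : nat -> R)
  (Hpi_nonneg : forall j, (j < N)%nat -> 0 <= pi j)
  (Hpi_sum : fsum N pi = 1)
  (Hpi_stat : forall j, (j < N)%nat ->
      fsum N (fun i => pi i * rsum (a i j)) = pi j)
  (Halpha : forall i j, (i < N)%nat -> (j < N)%nat ->
      exists s, infinite_sum (fun k => INR k * a i j k) s)
  (b : nat -> R)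
  (Hb_nonneg : forall k, 0 <= b k)
  (Hb0 : b 0%nat = 0)
  (Hb_sum : infinite_sum b 1)
  (x0 : nat) (q : nat -> R)
  (Hq_nonneg : forall j, (j < N)%nat -> 0 <= q j)
  (Hq_sum : fsum N q = 1)
  (f : Cplx -> nat -> Cplx)
  (Hrho : fsum N (fun i => fsum N (fun j => pi i * rsum (fun k => INR k * a i j k))) < 1)
  (Hf : forall z, Cnorm z <= 1 -> forall j, (j < N)%nat ->
      Ccv (fun n => gf (fun y => law N a b x0 q n y j) z) (f z j)) :
  (forall z, Cnorm z <= 1 -> forall j, (j < N)%nat ->
     Csub (Cmul (Csub z (gf (a j j) z)) (f z j))
          (Cfsum N (fun i => if Nat.eqb i j then Czero
                             else Cmul (gf (a i j) z) (f z i)))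
     = Cmul (Csub (gf b z) Cone)
            (Cfsum N (fun i => Cmul (gf (a i j) z) (f Czero i))))
  /\
  ((exists s, infinite_sum (fun k => INR k * b k) s) ->
     Cfsum N (fun i => f Czero i)
     = RtoC ((1 - fsum N (fun i => fsum N (fun j => pi i * rsum (fun k => INR k * a i j k))))
             / rsum (fun k => INR k * b k))).
Proof.
  split.
  - intros z Hz j Hj.
    pose proof (part1 N a Ha_nonneg Ha_sum b Hb_nonneg Hb0 Hb_sum x0 q Hq_nonneg f Hf z Hz j Hj) as K.
    pose proof (Cfsum_skip N (fun i => Cmul (gf (a i j) z) (f z i)) j Hj) as S. cbv beta in S.
    rewrite S.
    transitivity (Csub (Cmul z (f z j)) (Cfsum N (fun i => Cmul (gf (a i j) z) (f z i)))).
    ring. rewrite K. ring.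
  - intros HEB.
    assert (Er : rho' N a pi = fsum N (fun i => fsum N (fun j => pi i * rsum (fun k => INR k * a i j k)))).
    { unfold rho', alpha, al. apply fsum_ext_lt. intros i Hi.
      rewrite Rmult_comm. rewrite <- fsum_scal. auto. }
    assert (Hr : rho' N a pi < 1) by lra.
    pose proof (sz_value N a b x0 q f pi Ha_nonneg Ha_sum Hstoch Hirr Hpi_nonneg Hpi_sum Hpi_stat Halpha
      Hb_nonneg Hb0 Hb_sum Hq_nonneg Hq_sum Hf HEB Hr) as V.
    apply Cext.
    + rewrite Cfsum_re. simpl. change (sz N f = (1 - fsum N (fun i => fsum N (fun j => pi i * rsum (fun k => INR k * a i j k)))) / rsum (fun k => INR k * b k)).
      rewrite V, Er. unfold EB. auto.
    + rewrite Cfsum_im. simpl. transitivity (fsum N (fun _ => 0)).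
      apply fsum_ext_lt. intros i Hi.
      assert (E := proj1 (fr_prop N a b x0 q f Ha_nonneg Ha_sum Hb_nonneg Hb_sum Hq_nonneg Hf i 0 Hi ltac:(lra))).
      change Czero with (RtoC 0). rewrite E. reflexivity.
      clear. induction N; simpl; auto. rewrite IHN; ring.
Qed.
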